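(* Let $m>1$, $D>0$, $r>0$, let $b,d$ be as in the standing assumptions below with $b'(\kappa)<0$, and let $c_\kappa$ and $c^*$ be as defined below. Then $c^*(m,r,b'(\kappa),d'(\kappa))\ge c_\kappa(m,r,b'(\kappa),d'(\kappa))$. If $b'(\kappa)\ge-d'(\kappa)$, then $c^*(m,r,b'(\kappa),d'(\kappa))=+\infty$ for large time delay $r$; while if $b'(\kappa)<-d'(\kappa)$, then $$c^*(m,r,b'(\kappa),d'(\kappa))=\frac{\mu^*(m,b'(\kappa),d'(\kappa))+o(1)}{r},\qquad r\to+\infty,$$ where $\mu^*(m,b'(\kappa),d'(\kappa)):=\pi\sqrt{\frac{Dm\kappa^{m-1}}{-b'(\kappa)-d'(\kappa)}}$.
   Context: Standing assumptions: $d\in C^2([0,+\infty))$ with $d(0)=0$, $d'(s)>0$, $d''(s)\ge0$ for $s>0$; $b\in C^1([0,+\infty);[0,+\infty))$ has exactly one positive local extremum point $s_M$ (its global maximum point), $b(0)=0$, there is $\kappa>0$ with $b(\kappa)=d(\kappa)$, $b'(0)>d'(0)$, $b'(\kappa)<d'(\kappa)$, $d(s)<b(s)\le b'(0)s$ for $s\in(0,\kappa)$, and $s_M<\kappa$. For $c>0$ let $\chi_\kappa(\lambda):=Dm\kappa^{m-1}\lambda^2+b'(\kappa)e^{-\lambda cr}-c\lambda-d'(\kappa)$; $c_\kappa\in(0,+\infty]$ is the extended real number such that $\chi_\kappa$ has three real roots $\lambda_1\le\lambda_2<0<\lambda_3$ if and only if $c\le c_\kappa$ (and no negative real root for $c>c_\kappa$).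 With $\sigma=c^{-2}$, let $\chi^*(\lambda):=D\sigma m\kappa^{m-1}\lambda^2-\lambda-d'(\kappa)+b'(\kappa)e^{-\lambda r}$, $\lambda\in\mathbb C$. Then $c^*=c^*(m,r,b'(\kappa),d'(\kappa))\in(0,+\infty]$ is the largest extended real number such that (for speeds $c$ below it) $\chi^*$ has no roots in the half-plane $\{\Re z>0\}$ other than a positive real root. *)

(* Defs.v *)
From HB Require Import structures.
From mathcomp Require Import all_boot all_order all_algebra.
From mathcomp Require Import all_classical all_reals all_analysis.
Set Implicit Arguments. Unset Strict Implicit. Unset Printing Implicit Defensive.
Import Order.TTheory GRing.Theory Num.Theory.
Import numFieldNormedType.Exports.
Local Open Scope classical_set_scope.
Local Open Scope ring_scope.

Section Defs.
Variable R : realType.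

(* A stands for D*m*kappa^(m-1), beta for b'(kappa), delta for d'(kappa). *)

Definition chi_kappa (A beta delta r c lam : R) : R :=
  A * lam ^+ 2 + beta * expR (- (lam * c * r)) - c * lam - delta.

Definition dchi_kappa (A beta delta r c lam : R) : R :=
  2 * A * lam - beta * c * r * expR (- (lam * c * r)) - c.

(* chi_kappa has three real roots l1 <= l2 < 0 < l3 (counted with
   multiplicity: if l1 = l2 it is a double root). *)
Definition three_roots (A beta delta r c : R) : Prop :=
  exists l1 l2 l3 : R,
    [/\ l1 <= l2, l2 < 0 & 0 < l3] /\
    [/\ chi_kappa A beta delta r c l1 = 0,
        chi_kappa A beta delta r c l2 = 0 &
        chi_kappa A beta delta r c l3 = 0] /\
    (l1 = l2 -> dchi_kappa A beta delta r c l1 = 0).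

Definition ckappa (A beta delta r : R) : \bar R :=
  ereal_sup [set c%:E | c in [set c : R | 0 < c /\ three_roots A beta delta r c]].

(* chi^*(z) = A sigma z^2 - z - delta + beta e^{-z r}, sigma = c^{-2},
   evaluated at z = x + i y: real and imaginary parts. *)
Definition chistar_re (A beta delta r c x y : R) : R :=
  A * c ^- 2 * (x ^+ 2 - y ^+ 2) - x - delta + beta * expR (- (x * r)) * cos (y * r).
Definition chistar_im (A beta delta r c x y : R) : R :=
  A * c ^- 2 * (2 * x * y) - y - beta * expR (- (x * r)) * sin (y * r).

Definition good_speed (A beta delta r c : R) : Prop :=
  forall x y : R, 0 < x ->
    chistar_re A beta delta r c x y = 0 ->
    chistar_im A beta delta r c x y = 0 -> y = 0.

Definition cstar (A beta delta r : R) : \bar R :=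
  ereal_sup [set cb : \bar R |
    forall c : R, 0 < c -> (c%:E < cb)%E -> good_speed A beta delta r c].

Definition mustar (A beta delta : R) : R :=
  pi * Num.sqrt (A / (- beta - delta)).

Definition local_extremum (f : R -> R) (s : R) : Prop :=
  (\forall x \near s, f x <= f s) \/ (\forall x \near s, f s <= f x).

End Defs.

(* Main.v *)
Require Import Defs.
From HB Require Import structures.
From mathcomp Require Import all_boot all_order all_algebra.
From mathcomp Require Import all_classical all_reals all_analysis.
From mathcomp Require Import ring lra.
Import Order.TTheory GRing.Theory Num.Theory.
Import numFieldNormedType.Exports.
Local Open Scope classical_set_scope.
Local Open Scope ring_scope.
Set Implicit Arguments. Unset Strict Implicit. Unset Printing Implicit Defensive.
Lemma expR_taylor3 (R : realType) (t : R) : 0 <= t ->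
  1 + t + t ^+ 2 / 2 + t ^+ 3 / 6 <= expR t.
Proof.
move=> t0; rewrite /expR.
have inc : {homo series (exp_coeff t) : n m / (n <= m)%N >-> n <= m}.
  apply: nondecreasing_series => n _; rewrite /exp_coeff /=.
  by rewrite divr_ge0 // exprn_ge0.
have := nondecreasing_cvgn_le inc (is_cvg_series_exp_coeff t) 4.
congr (_ <= _).
rewrite /series /= !big_nat_recr //= big_geq // /exp_coeff /=.
rewrite !factS /= fact0; rewrite expr0 expr1.
by rewrite !natrM /=; field.
Qed.
Lemma good_of_pos (R : realType) (A be de r c : R) :
  (forall x y : R, 0 < x -> 0 < y ->
     chistar_re A be de r c x y = 0 -> chistar_im A be de r c x y = 0 -> False) ->
  good_speed A be de r c.
Proof.
move=> H x y x0 hre him.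
case: (ltrgtP y 0) => // [y0|y0]; exfalso.
- apply: (H x (- y)) => //; first by rewrite oppr_gt0.
  + move: hre; rewrite /chistar_re sqrrN mulNr cosN //.
  + move: him; rewrite /chistar_im mulNr sinN.
    move=> h; rewrite -[RHS]oppr0 -h; ring.
- exact: (H x y).
Qed.

Lemma core_eqs (R : realType) (a be de r x y : R) :
  a * (x ^+ 2 - y ^+ 2) - x - de + be * expR (- (x * r)) * cos (y * r) = 0 ->
  a * (2 * x * y) - y - be * expR (- (x * r)) * sin (y * r) = 0 ->
  (2 * a * x - 1) * y = be * expR (- (x * r)) * sin (y * r) /\
  2 * a * y ^+ 3 = - x * y - 2 * de * y
     + be * expR (- (x * r)) * (x * sin (y * r) + 2 * y * cos (y * r)).
Proof.
set E := expR _; set s := sin _; set C := cos _.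
move=> hre him; split.
  by apply/eqP; rewrite -subr_eq0 -him; apply/eqP; ring.
apply/eqP; rewrite -subr_eq0.
have -> : 2 * a * y ^+ 3 - (- x * y - 2 * de * y + be * E * (x * s + 2 * y * C))
  = x * (a * (2 * x * y) - y - be * E * s) - 2 * y * (a * (x ^+ 2 - y ^+ 2) - x - de + be * E * C) by ring.
by rewrite hre him; apply/eqP; ring.
Qed.
Lemma sin_cos_small (R : realType) (v : R) : 0 < v -> v < 1 -> 0 < sin v /\ 0 <= cos v.
Proof.
move=> v0 v1; have h1 := @pihalf_ge1 R; split.
  by apply: sin_gt0_pihalf; rewrite v0 /=; lra.
by apply: cos_ge0_pihalf; apply/andP; split; lra.
Qed.

Lemma cos_neg_big (R : realType) (v : R) : 0 < v -> cos v < 0 -> pi / 2 < v.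
Proof.
move=> v0 c0; rewrite ltNge; apply/negP => hv.
have p0 := @pi_gt0 R.
have h : 0 <= cos v by apply: cos_ge0_pihalf; apply/andP; split; lra.
lra.
Qed.

Lemma sin_nonpos_big (R : realType) (v : R) : 0 < v -> sin v <= 0 -> pi <= v.
Proof.
move=> v0 s0; rewrite leNgt; apply/negP => hv.
have h : 0 < sin v by apply: sin_gt0_pi; rewrite v0 hv.
lra.
Qed.

Lemma expR_lin_bound (R : realType) (w : R) : expR (- w) * (1 + w) <= 1.
Proof.
rewrite expRN ler_pdivrMl ?expR_gt0 // mulr1; exact: expR_ge1Dx.
Qed.

Lemma p2core (R : realType) (a be de r x y : R) :
  0 < a -> 0 < r -> 0 < x -> 0 < y -> be < 0 -> - de <= be ->
  a * (x ^+ 2 - y ^+ 2) - x - de + be * expR (- (x * r)) * cos (y * r) = 0 ->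
  a * (2 * x * y) - y - be * expR (- (x * r)) * sin (y * r) = 0 -> False.
Proof.
move=> a0 r0 x0 y0 be0 hde hre him.
have [_ E1] := core_eqs hre him.
move: E1; set E := expR _; set s := sin _; set C := cos _ => E1.
have E0 : 0 < E by rewrite expR_gt0.
have Eb := expR_lin_bound (x * r); rewrite -/E in Eb.
have de0 : 0 < de by lra.
have ay : 0 < 2 * a * y ^+ 3 by rewrite !mulr_gt0 // exprn_gt0.
have xy : 0 < x * y by rewrite mulr_gt0.
have dy : 0 < de * y by rewrite mulr_gt0.
have v0 : 0 < y * r by rewrite mulr_gt0.
case: (ltP (y * r) 1) => hv.
  have [s0 c0] := sin_cos_small v0 hv; rewrite -/s -/C in s0 c0.
  have q0 : 0 <= x * s + 2 * y * C by rewrite addr_ge0 // ?mulr_ge0 // ?ltW.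
  have : 0 <= (- be) * E * (x * s + 2 * y * C).
    by rewrite mulr_ge0 // mulr_ge0 // ?ltW //; lra.
  lra.
have s1 := sin_le1 (y * r); have s2 := sin_geN1 (y * r).
have c1 := cos_le1 (y * r); have c2 := cos_geN1 (y * r).
rewrite -/s -/C in s1 s2 c1 c2.
set b := - be.
have b0 : 0 < b by rewrite /b; lra.
have h1 : - (x * s + 2 * y * C) <= x + 2 * y by nra.
have h2 : x <= x * (y * r) by rewrite ler_peMr // ltW.
have h3 : be * E * (x * s + 2 * y * C) <= b * E * (x * (y * r) + 2 * y).
  have -> : be * E * (x * s + 2 * y * C) = b * E * (- (x * s + 2 * y * C)) by rewrite /b; ring.
  rewrite ler_pM2l ?mulr_gt0 //; lra.
have h4 : E * (x * (y * r) + 2 * y) <= 2 * y.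
  have -> : E * (x * (y * r) + 2 * y) = y * (E * (x * r + 2)) by ring.
  rewrite -[X in _ <= X]mulrC ler_pM2l //; nra.
have h5 : b * E * (x * (y * r) + 2 * y) <= 2 * de * y.
  rewrite -mulrA; have -> : 2 * de * y = de * (2 * y) by ring.
  have hxyr : 0 <= x * (y * r) + 2 * y by rewrite addr_ge0 // ?mulr_ge0 // ?ltW.
  apply: ler_pM; [lra | apply: mulr_ge0; lra | rewrite /b; lra | exact: h4].
lra.
Qed.
Lemma poly_aux (R : realType) (t : R) : 0 <= t -> t ^+ 2 + t <= expR t.
Proof.
move=> t0; have h := expR_taylor3 t0.
have : t ^+ 2 + t <= 1 + t + t ^+ 2 / 2 + t ^+ 3 / 6; last lra.
have : 0 <= (t - 2) ^+ 2 * (t + 1) by rewrite mulr_ge0 ?sqr_ge0 //; lra.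
have -> : t ^+ 3 = t ^+ 2 * t by rewrite exprS mulrC.
nra.
Qed.

Lemma keyK_scaled (R : realType) (u t v : R) :
  0 < u -> u <= t -> 0 < v -> 0 < - (u * sin v + 2 * v * cos v) ->
  - (u * sin v + 2 * v * cos v) * t ^+ 2 + v ^+ 2 * sin v * (2 * t - u)
    <= 2 * v ^+ 3 * expR t.
Proof.
move=> u0 ut v0 hphi.
have t0 : 0 <= t by lra.
have s1 := sin_le1 v; have s2 := sin_geN1 v.
have c1 := cos_le1 v; have c2 := cos_geN1 v.
have t2 : 0 <= t ^+ 2 by rewrite sqr_ge0.
have v2 : 0 < v ^+ 2 by rewrite exprn_gt0.
have v3 : v ^+ 3 = v ^+ 2 * v by rewrite exprS mulrC.
have t3 : t ^+ 3 = t ^+ 2 * t by rewrite exprS mulrC.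
case: (leP 0 (sin v)) => hs.
  have hus : 0 <= u * sin v by rewrite mulr_ge0 // ltW.
  have hC : cos v < 0 by nra.
  have hv : 1 <= v by have := cos_neg_big v0 hC; have := @pihalf_ge1 R; lra.
  have e1 : - (u * sin v + 2 * v * cos v) * t ^+ 2 <= 2 * v * t ^+ 2.
    by apply: ler_wpM2r => //; nra.
  have e2 : v ^+ 2 * sin v * (2 * t - u) <= v ^+ 2 * (2 * t).
    rewrite -mulrA ler_pM2l //; nra.
  have e3 : 2 * v * t ^+ 2 + v ^+ 2 * (2 * t) <= 2 * v ^+ 3 * (t ^+ 2 + t).
    rewrite v3.
    have h1 : v <= v ^+ 2 by rewrite expr2; nra.
    have h2 : v ^+ 2 <= v ^+ 2 * v by rewrite ler_peMr // ltW.
    nra.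
  have e4 : 2 * v ^+ 3 * (t ^+ 2 + t) <= 2 * v ^+ 3 * expR t.
    by rewrite ler_pM2l ?poly_aux // mulr_gt0 // exprn_gt0.
  lra.
have hv : 2 <= v by have := sin_nonpos_big v0 (ltW hs); have := @pi_ge2 R; lra.
have e1 : - (u * sin v + 2 * v * cos v) * t ^+ 2 <= (t + 2 * v) * t ^+ 2.
  by apply: ler_wpM2r => //; nra.
have e2 : v ^+ 2 * sin v * (2 * t - u) <= 0.
  rewrite -mulrA pmulr_rle0 //; nra.
have e3 : (t + 2 * v) * t ^+ 2 <= 2 * v ^+ 3 * (t ^+ 2 / 2 + t ^+ 3 / 6).
  rewrite v3 t3.
  have h1 : 4 <= v ^+ 2 by rewrite expr2; nra.
  have h3 : 8 <= v ^+ 2 * v by nra.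
  have h4 : 0 <= t ^+ 2 * t by rewrite mulr_ge0.
  have k1 : 0 <= (v ^+ 2 * v - 3) * (t ^+ 2 * t) by rewrite mulr_ge0 //; lra.
  have k2 : 0 <= (v ^+ 2 * v - 2 * v) * t ^+ 2.
    rewrite mulr_ge0 //; have -> : v ^+ 2 * v - 2 * v = v * (v ^+ 2 - 2) by ring.
    rewrite mulr_ge0 //; lra.
  rewrite -subr_ge0.
  have -> : 2 * (v ^+ 2 * v) * (t ^+ 2 / 2 + t ^+ 2 * t / 6) - (t + 2 * v) * t ^+ 2
    = (v ^+ 2 * v - 2 * v) * t ^+ 2 + (v ^+ 2 * v - 3) * (t ^+ 2 * t) / 3 by field.
  by rewrite addr_ge0 // divr_ge0.
have e4 : 2 * v ^+ 3 * (t ^+ 2 / 2 + t ^+ 3 / 6) <= 2 * v ^+ 3 * expR t.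
  rewrite ler_pM2l ?mulr_gt0 ?exprn_gt0 //.
  have := expR_taylor3 t0; lra.
lra.
Qed.
Lemma p1core (R : realType) (a be de r x y p : R) :
  0 < a -> 0 < r -> 0 < x -> 0 < y -> be < 0 -> 0 < de -> 0 < p ->
  0 <= a * p ^+ 2 + p - de + be * expR (p * r) ->
  a * (x ^+ 2 - y ^+ 2) - x - de + be * expR (- (x * r)) * cos (y * r) = 0 ->
  a * (2 * x * y) - y - be * expR (- (x * r)) * sin (y * r) = 0 -> False.
Proof.
move=> a0 r0 x0 y0 be0 de0 p0 hIII hre him.
have [I II] := core_eqs hre him.
move: I II hIII; set E := expR (- (x * r)); set s := sin _; set C := cos _.
set P := expR (p * r) => I II III.
set T := p + x.
have hP : P = E * expR (T * r).
  by rewrite /P /E -expRD; congr expR; rewrite /T; ring.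
have E0 : 0 < E by rewrite expR_gt0.
set b := - be.
have b0 : 0 < b by rewrite /b; lra.
set Phi := - (x * s + 2 * y * C).
have ay3 : 0 < 2 * a * y ^+ 3 by rewrite !mulr_gt0 // exprn_gt0.
have xy : 0 < x * y by rewrite mulr_gt0.
have dy : 0 < de * y by rewrite mulr_gt0.
have hlt : 2 * a * y ^+ 3 < b * E * Phi.
  have -> : b * E * Phi = be * E * (x * s + 2 * y * C) by rewrite /b /Phi; ring.
  lra.
have Phi0 : 0 < Phi.
  rewrite ltNge; apply/negP => hp.
  have : b * E * Phi <= 0 by rewrite pmulr_rle0 // mulr_gt0.
  lra.
have TT : 0 < T ^+ 2 + y ^+ 2 by rewrite ltr_pwDr ?exprn_gt0 // sqr_ge0.
have K : Phi * T ^+ 2 + y ^+ 2 * s * (2 * T - x) <= 2 * y ^+ 3 * expR (T * r).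
  have r3 : 0 < r ^+ 3 by rewrite exprn_gt0.
  rewrite -(ler_pM2l r3).
  have := @keyK_scaled R (x * r) (T * r) (y * r).
  rewrite -/s -/C.
  have -> : - (x * r * s + 2 * (y * r) * C) * (T * r) ^+ 2
     + (y * r) ^+ 2 * s * (2 * (T * r) - x * r)
     = r ^+ 3 * (Phi * T ^+ 2 + y ^+ 2 * s * (2 * T - x)) by rewrite /Phi; ring.
  have -> : 2 * (y * r) ^+ 3 * expR (T * r) = r ^+ 3 * (2 * y ^+ 3 * expR (T * r)) by ring.
  apply; rewrite ?mulr_gt0 //.
  - by rewrite ler_pM2r // /T; lra.
  - have -> : - (x * r * s + 2 * (y * r) * C) = r * Phi by rewrite /Phi; ring.
    by rewrite mulr_gt0.
have Q : 0 <= 2 * a * y * (T ^+ 2 + y ^+ 2) - 2 * b * (y * P - E * (T * s + y * C)).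
  have -> : 2 * a * y * (T ^+ 2 + y ^+ 2) - 2 * b * (y * P - E * (T * s + y * C))
    = 2 * y * (a * p ^+ 2 + p - de + be * P)
      + (2 * a * y ^+ 3 - (- x * y - 2 * de * y + be * E * (x * s + 2 * y * C)))
      + (2 * p + x) * ((2 * a * x - 1) * y - be * E * s) by rewrite /b /T; ring.
  rewrite I II !subrr mulr0 !addr0; apply: mulr_ge0 => //; lra.
have h1 : 2 * a * y ^+ 3 * (T ^+ 2 + y ^+ 2) < b * E * Phi * (T ^+ 2 + y ^+ 2).
  by rewrite ltr_pM2r.
have h2 : b * E * (Phi * T ^+ 2) <= b * E * (2 * y ^+ 3 * expR (T * r) - y ^+ 2 * s * (2 * T - x)).
  rewrite ler_pM2l ?mulr_gt0 //; lra.
have h3 : 0 <= y ^+ 2 * (2 * a * y * (T ^+ 2 + y ^+ 2) - 2 * b * (y * P - E * (T * s + y * C))).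
  by rewrite mulr_ge0 // sqr_ge0.
have e1 : b * E * Phi * (T ^+ 2 + y ^+ 2) = b * E * (Phi * T ^+ 2) + b * E * Phi * y ^+ 2 by ring.
have e2 : b * E * (2 * y ^+ 3 * expR (T * r) - y ^+ 2 * s * (2 * T - x)) + b * E * Phi * y ^+ 2
   = y ^+ 2 * (2 * b * (y * P - E * (T * s + y * C))).
  by rewrite hP /Phi /T; ring.
have e3 : 2 * a * y ^+ 3 * (T ^+ 2 + y ^+ 2) = y ^+ 2 * (2 * a * y * (T ^+ 2 + y ^+ 2)) by ring.
have e4 : y ^+ 2 * (2 * a * y * (T ^+ 2 + y ^+ 2) - 2 * b * (y * P - E * (T * s + y * C)))
  = y ^+ 2 * (2 * a * y * (T ^+ 2 + y ^+ 2)) - y ^+ 2 * (2 * b * (y * P - E * (T * s + y * C))) by ring.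
lra.
Qed.
Lemma sin_lower (R : realType) (eta v : R) :
  0 < eta -> eta < 1 -> pi / 2 < v -> v <= pi - eta -> sin eta <= sin v.
Proof.
move=> e0 e1 hv1 hv2.
have h1 := @pihalf_ge1 R; have p0 := @pi_gt0 R.
have -> : sin v = sin (pi - v) by rewrite sinB sinpi cospi; ring.
have me : eta \in `[- (pi / 2), pi / 2] by rewrite in_itv /=; apply/andP; split; lra.
have mv : pi - v \in `[- (pi / 2), pi / 2] by rewrite in_itv /=; apply/andP; split; lra.
case: (ltrgtP eta (pi - v)) => h.
- by apply: ltW; rewrite (ltr_sin me mv).
- lra.
- by rewrite h.
Qed.

Lemma p3low (R : realType) (a be de r x y eta : R) :
  0 < r -> 0 < x -> 0 < y -> be < - de -> 0 < de -> 0 < eta -> eta < 1 ->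
  (- be - de) / (pi - eta) ^+ 2 * r ^+ 2 <= a ->
  1 <= 2 * ((- be - de) / (pi - eta) ^+ 2) * r ->
  pi * expR 1 <= (- be) * sin eta * r ->
  a * (x ^+ 2 - y ^+ 2) - x - de + be * expR (- (x * r)) * cos (y * r) = 0 ->
  a * (2 * x * y) - y - be * expR (- (x * r)) * sin (y * r) = 0 -> False.
Proof.
move=> r0 x0 y0 hbe de0 e0 e1 ha hr1 hr2 hre him.
have [I II] := core_eqs hre him.
move: I II; set E := expR (- (x * r)); set s := sin _; set C := cos _ => I II.
have E0 : 0 < E by rewrite expR_gt0.
have E1 : E <= 1 by rewrite /E expR_le1 oppr_le0 mulr_ge0 // ltW.
set b := - be.
have b0 : 0 < b by rewrite /b; lra.
have hbd : de < b by rewrite /b; lra.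
have p0 := @pi_gt0 R; have p2 := @pi_ge2 R; have ph := @pihalf_ge1 R.
have pe : 0 < pi - eta by lra.
set k1 := (b - de) / (pi - eta) ^+ 2.
have hk1 : k1 * (pi - eta) ^+ 2 = b - de by rewrite /k1 divfK // expf_neq0 // gt_eqF.
have k10 : 0 < k1 by rewrite /k1 divr_gt0 ?exprn_gt0 //; lra.
have a0 : 0 < a by apply: lt_le_trans ha; rewrite mulr_gt0 // exprn_gt0.
have s1 := sin_le1 (y * r); have s2 := sin_geN1 (y * r).
have c1 := cos_le1 (y * r); have c2 := cos_geN1 (y * r).
rewrite -/s -/C in s1 s2 c1 c2.
have xy : 0 < x * y by rewrite mulr_gt0.
have dy : 0 < de * y by rewrite mulr_gt0.
have y2 : 0 < y ^+ 2 by rewrite exprn_gt0.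
have hay : k1 * (y * r) ^+ 2 <= a * y ^+ 2.
  have -> : k1 * (y * r) ^+ 2 = (k1 * r ^+ 2) * y ^+ 2 by ring.
  by rewrite ler_pM2r.
have v0 : 0 < y * r by rewrite mulr_gt0.
suff [hlt hv] : a * y ^+ 2 < b - de /\ pi - eta < y * r.
  have : k1 * (pi - eta) ^+ 2 < k1 * (y * r) ^+ 2.
    rewrite ltr_pM2l // ltr_pXn2r // ?inE //; apply: ltW => //.
  lra.
have hay2 : 2 * a * y ^+ 3 = y * (2 * (a * y ^+ 2)) by ring.
case: (leP pi (y * r)) => hv.
  have h1 : - (x * s + 2 * y * C) <= x + 2 * y by nra.
  have h2 : x <= x * (y * r) by rewrite ler_peMr // ?ltW //; lra.
  have h3 : be * E * (x * s + 2 * y * C) <= b * E * (x * (y * r) + 2 * y).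
    have -> : be * E * (x * s + 2 * y * C) = b * E * (- (x * s + 2 * y * C)) by rewrite /b; ring.
    rewrite ler_pM2l ?mulr_gt0 //; lra.
  have Eb := expR_lin_bound (x * r); rewrite -/E in Eb.
  have h4 : E * (x * (y * r) + 2 * y) <= 2 * y.
    have -> : E * (x * (y * r) + 2 * y) = y * (E * (x * r + 2)) by ring.
    rewrite -[X in _ <= X]mulrC ler_pM2l //; nra.
  have h5 : b * E * (x * (y * r) + 2 * y) <= 2 * b * y.
    have -> : 2 * b * y = b * (2 * y) by ring.
    by rewrite -mulrA ler_pM2l.
  split; last lra.
  have : y * (2 * (a * y ^+ 2)) < y * (2 * (b - de)) by lra.
  rewrite ltr_pM2l //; lra.
have s0 : 0 < s by apply: sin_gt0_pi; rewrite v0 hv.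
have xs : 0 < x * s by rewrite mulr_gt0.
have bEs : 0 < b * E * (x * s) by rewrite !mulr_gt0.
have hC : - (E * C) <= 1 by nra.
have hlt : a * y ^+ 2 < b - de.
  have : y * (2 * (a * y ^+ 2)) < y * (2 * (b - de)).
    have -> : y * (2 * (b - de)) = 2 * b * y - 2 * de * y by ring.
    have : b * (- (E * C)) * y <= b * y by rewrite ler_pM2r // -[X in _ <= X]mulr1 ler_pM2l.
    have eII : be * E * (x * s + 2 * y * C) = - (b * E * (x * s)) + 2 * (b * (- (E * C)) * y) by rewrite /b; ring.
    lra.
  by rewrite ltr_pM2l //; lra.
split => //.
have C0 : C < 0.
  rewrite ltNge; apply/negP => c0.
  have : 0 <= b * E * (y * C) by rewrite mulr_ge0 // ?mulr_ge0 // ?ltW.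
  have : 0 < 2 * a * y ^+ 3 by rewrite !mulr_gt0 // exprn_gt0.
  have eII : be * E * (x * s + 2 * y * C) = - (b * E * (x * s)) - 2 * (b * E * (y * C)) by rewrite /b; ring.
  lra.
have hv1 := cos_neg_big v0 C0.
have ax : 2 * a * x < 1.
  have : (2 * a * x - 1) * y < 0.
    rewrite I; have -> : be * E * s = - (b * E * s) by rewrite /b; ring.
    by rewrite oppr_lt0 !mulr_gt0.
  by rewrite pmulr_llt0 //; lra.
have xr1 : x * r < 1.
  have : 2 * k1 * r ^+ 2 * x <= 2 * a * x.
    rewrite ler_pM2r // -mulrA ler_pM2l //.
  have : x * r <= (2 * k1 * r) * (x * r) by rewrite ler_peMl // mulr_ge0 // ltW.
  have -> : (2 * k1 * r) * (x * r) = 2 * k1 * r ^+ 2 * x by ring.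
  lra.
have Ee : expR (-1) <= E by rewrite /E ler_expR; lra.
have hs : b * expR (-1) * s < y.
  have : b * E * s = (1 - 2 * a * x) * y.
    have -> : b * E * s = - (be * E * s) by rewrite /b; ring.
    by rewrite -I; ring.
  have : b * expR (-1) * s <= b * E * s.
    by rewrite ler_pM2r // ler_pM2l.
  have ax0 : 0 < a * x by rewrite mulr_gt0.
  have : (1 - 2 * a * x) * y < y by rewrite gtr_pMl //; lra.
  lra.
have hs2 : b * s * r < pi * expR 1.
  have ee : expR (-1) * expR 1 = 1 :> R by rewrite -expRD addNr expR0.
  have e10 : 0 < expR (1 : R) by rewrite expR_gt0.
  have : b * expR (-1) * s * (r * expR 1) < y * (r * expR 1) by rewrite ltr_pM2r // mulr_gt0.
  have -> : b * expR (-1) * s * (r * expR 1) = b * s * r * (expR (-1) * expR 1) by ring.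
  rewrite ee mulr1 => h.
  have : y * (r * expR 1) < pi * expR 1 by rewrite mulrA ltr_pM2r.
  lra.
rewrite ltNge; apply/negP => hv2.
have := sin_lower e0 e1 hv1 hv2; rewrite -/s => hse.
have : b * sin eta * r <= b * s * r by rewrite ler_pM2r // ler_pM2l.
have hr2' : pi * expR 1 <= b * sin eta * r by [].
lra.
Qed.
Lemma H_cont (R : realType) (r b E u de : R) : continuous (fun v : R => v * v * v / r - b * E * (v * v) * sin v + u * u * v / r + 2 * u * de * v
  + b * E * (u * u) * sin v + 2 * u * b * E * v * cos v).
Proof.
move=> v.
have cid : (fun x : R => x) @ v --> v by apply: cvg_id.
have ccst : forall k : R, (fun _ : R => k) @ v --> k by move=> k; apply: cvg_cst.
have csin : (fun x : R => sin x) @ v --> sin v by apply: continuous_sin.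
have ccos : (fun x : R => cos x) @ v --> cos v by apply: continuous_cos.
apply: cvgD; last by apply: cvgM; [apply: cvgM; [exact: ccst | exact: cid] | exact: ccos].
apply: cvgD; last by apply: cvgM; [exact: ccst | exact: csin].
apply: cvgD; last by apply: cvgM; [exact: ccst | exact: cid].
apply: cvgD; last by apply: cvgM; [apply: cvgM; [exact: ccst | exact: cid] | exact: ccst].
apply: cvgB; last by apply: cvgM; [apply: cvgM; [exact: ccst | apply: cvgM; exact: cid] | exact: csin].
by apply: cvgM; [apply: cvgM; [apply: cvgM; exact: cid | exact: cid] | exact: ccst].
Qed.

Lemma p3exist (R : realType) (be de r u eta : R) :
  be < - de -> 0 < de -> 0 < eta -> eta < 1 -> 0 < u -> u <= 1 / 2 ->
  u <= sin eta / 2 -> 1 <= r ->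
  0 < (- be) * (1 - u) * cos eta - de - u / 2 ->
  pi ^+ 2 + 1 < 2 * u * ((- be) * (1 - u) - de) * r ->
  exists x y a : R, 0 < x /\ 0 < y /\ 0 < a /\
    a * (x ^+ 2 - y ^+ 2) - x - de + be * expR (- (x * r)) * cos (y * r) = 0 /\
    a * (2 * x * y) - y - be * expR (- (x * r)) * sin (y * r) = 0 /\
    ((- be) * (1 - u) * cos eta - de - u / 2) / (pi + eta) ^+ 2 * r ^+ 2 <= a.
Proof.
move=> hbe de0 e0 e1 u0 u1 u2 r1 hnum hr.
set b := - be in hnum hr *.
have b0 : 0 < b by rewrite /b; lra.
have r0 : 0 < r by lra.
set E := expR (- u).
have E0 : 0 < E by rewrite expR_gt0.
have Eu : 1 - u <= E by have := expR_ge1Dx (- u); rewrite -/E; lra.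
have E1 : E <= 1 by rewrite /E expR_le1 oppr_le0 ltW.
have p0 := @pi_gt0 R; have p2 := @pi_ge2 R; have ph := @pihalf_ge1 R.
have ce1 := cos_le1 eta.
have se0 : 0 < sin eta by apply: sin_gt0_pihalf; rewrite e0 /=; lra.
have ce0 : 0 < cos eta.
  rewrite ltNge; apply/negP => hc.
  have : b * (1 - u) * cos eta <= 0 by rewrite pmulr_rle0 // mulr_gt0 //; lra.
  lra.
pose H v := v * v * v / r - b * E * (v * v) * sin v + u * u * v / r + 2 * u * de * v
  + b * E * (u * u) * sin v + 2 * u * b * E * v * cos v.
have HA : H pi < 0.
  rewrite /H sinpi cospi.
  have -> : pi * pi * pi / r - b * E * (pi * pi) * 0 + u * u * pi / r + 2 * u * de * pi +
     b * E * (u * u) * 0 + 2 * u * b * E * pi * -1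
     = pi / r * (pi ^+ 2 + u ^+ 2 - 2 * u * (b * E - de) * r) by field; lra.
  rewrite pmulr_rlt0 ?divr_gt0 //.
  have : 2 * u * (b * (1 - u) - de) * r <= 2 * u * (b * E - de) * r.
    rewrite ler_pM2r // ler_pM2l ?mulr_gt0 //.
    have : b * (1 - u) <= b * E by rewrite ler_pM2l.
    lra.
  have : u ^+ 2 <= 1 by rewrite expr2; nra.
  lra.
have HB : 0 < H (pi + eta).
  rewrite /H (addrC pi eta) sinDpi cosDpi -(addrC pi eta).
  set v := pi + eta.
  have v2 : 2 <= v by rewrite /v; lra.
  have Z : 0 < v * v * sin eta - u * u * sin eta - 2 * u * v * cos eta.
    have h1 : 2 * u * v * cos eta <= v * sin eta.
      have : 2 * u * cos eta <= sin eta by nra.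
      nra.
    have uu : u * u <= 1 / 4 by nra.
    have h2 : 0 <= (1 / 4 - u * u) * sin eta by rewrite mulr_ge0 //; lra.
    have h3 : 0 < (v * v - v - 1 / 4) * sin eta by rewrite mulr_gt0 //; nra.
    lra.
  have bEZ : 0 < b * E * (v * v * sin eta - u * u * sin eta - 2 * u * v * cos eta) by rewrite !mulr_gt0.
  have vv : 0 <= v * v * v by apply: mulr_ge0; [apply: mulr_ge0|]; lra.
  have t1 : 0 <= v * v * v / r by apply: divr_ge0 => //; lra.
  have uuv : 0 <= u * u * v by apply: mulr_ge0; [apply: mulr_ge0|]; lra.
  have t2 : 0 <= u * u * v / r by apply: divr_ge0 => //; lra.
  have t3 : 0 <= 2 * u * de * v by apply: mulr_ge0; [apply: mulr_ge0; [apply: mulr_ge0|]|]; lra.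
  have -> : v * v * v / r - b * E * (v * v) * - sin eta + u * u * v / r + 2 * u * de * v +
    b * E * (u * u) * - sin eta + 2 * u * b * E * v * - cos eta
    = v * v * v / r + u * u * v / r + 2 * u * de * v
      + b * E * (v * v * sin eta - u * u * sin eta - 2 * u * v * cos eta) by ring.
  lra.
have [v vI Hv] : exists2 v, v \in `[pi, pi + eta] & H v = 0.
  apply: IVT; first lra.
    by apply: continuous_subspaceT; exact: H_cont.
  by rewrite ge_min le_max (ltW HA) (ltW HB) orbT.
move: vI; rewrite in_itv /= => /andP[vlo vhi].
have v0 : 0 < v by lra.
have sv : sin v <= 0.
  have -> : sin v = - sin (v - pi) by rewrite sinB sinpi cospi; ring.
  rewrite oppr_le0; apply: sin_ge0_pi; apply/andP; split; lra.
have cv : cos eta <= - cos v.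
  have -> : - cos v = cos (v - pi) by rewrite cosB sinpi cospi; ring.
  have m1 : eta \in `[0, pi] by rewrite in_itv /=; apply/andP; split; lra.
  have m2 : v - pi \in `[0, pi] by rewrite in_itv /=; apply/andP; split; lra.
  case: (ltrgtP (v - pi) eta) => h.
  - by apply: ltW; rewrite (ltr_cos m2 m1).
  - lra.
  - by rewrite h.
set k := (v / r - b * E * sin v) / (2 * u * v).
have k0 : 0 < k.
  rewrite /k divr_gt0 ?mulr_gt0 //.
  have : 0 <= - (b * E * sin v) by rewrite oppr_ge0 pmulr_rle0 // mulr_gt0.
  have : 0 < v / r by rewrite divr_gt0.
  lra.
exists (u / r), (v / r), (r ^+ 2 * k).
have xr : u / r * r = u by rewrite divfK // gt_eqF.
have yr : v / r * r = v by rewrite divfK // gt_eqF.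
have hre : r ^+ 2 * k * ((u / r) ^+ 2 - (v / r) ^+ 2) - u / r - de
    + be * expR (- (u / r * r)) * cos (v / r * r) = 0.
  rewrite xr yr -/E.
  have uv : 2 * u * v != 0 by rewrite gt_eqF // !mulr_gt0.
  apply: (@mulIf _ (2 * u * v)) => //; rewrite mul0r -[RHS]oppr0 -Hv /H /k /b.
  by field; rewrite gt_eqF //=; rewrite gt_eqF //= gt_eqF.
have him : r ^+ 2 * k * (2 * (u / r) * (v / r)) - v / r
    - be * expR (- (u / r * r)) * sin (v / r * r) = 0.
  rewrite xr yr -/E /k /b.
  by field; rewrite gt_eqF //=; rewrite gt_eqF //= gt_eqF.
split; first by rewrite divr_gt0.
split; first by rewrite divr_gt0.
split; first by rewrite mulr_gt0 // exprn_gt0.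
split => //; split => //.
have [_ II] := core_eqs hre him.
move: II; rewrite xr yr -/E.
set a := r ^+ 2 * k; set x := u / r; set y := v / r => II.
have x0 : 0 < x by rewrite divr_gt0.
have y0 : 0 < y by rewrite divr_gt0.
have xu : x <= u by rewrite /x ler_pdivrMr // ler_peMr // ltW.
set N := b * (1 - u) * cos eta - de - u / 2.
have aN : N <= a * y ^+ 2.
  have h1 : 0 <= - (b * E * (x * sin v)).
    by rewrite oppr_ge0 pmulr_rle0 ?mulr_gt0 // mulr_ge0_le0 // ltW.
  have h2 : b * (1 - u) * cos eta <= b * E * (- cos v).
    rewrite -mulrA -mulrA ler_pM2l //.
    apply: ler_pM => //; [lra | lra].
  have h3 : 2 * y * N <= 2 * a * y ^+ 3.
    have eII : be * E * (x * sin v + 2 * y * cos v)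
      = - (b * E * (x * sin v)) + 2 * y * (b * E * (- cos v)) by rewrite /b; ring.
    rewrite II eII.
    rewrite /N.
    have : x * y <= u * y by rewrite ler_pM2r.
    have : 2 * y * (b * (1 - u) * cos eta) <= 2 * y * (b * E * (- cos v)).
      by rewrite ler_pM2l // mulr_gt0.
    lra.
  have : 2 * y * N <= 2 * y * (a * y ^+ 2).
    by have -> : 2 * y * (a * y ^+ 2) = 2 * a * y ^+ 3 by ring.
  by rewrite ler_pM2l // mulr_gt0.
have N0 : 0 < N by [].
have yv : a * y ^+ 2 = a * v ^+ 2 / r ^+ 2 by rewrite /y; field; rewrite gt_eqF.
have hv2 : v ^+ 2 <= (pi + eta) ^+ 2 by rewrite !expr2; apply: ler_pM; lra.
have pe0 : 0 < (pi + eta) ^+ 2 by rewrite exprn_gt0 //; lra.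
have vv0 : 0 < v ^+ 2 by rewrite exprn_gt0.
have -> : N / (pi + eta) ^+ 2 * r ^+ 2 = N * r ^+ 2 / (pi + eta) ^+ 2 by rewrite mulrAC.
rewrite ler_pdivrMr //.
have : N * r ^+ 2 <= a * v ^+ 2.
  move: aN; rewrite yv ler_pdivlMr ?exprn_gt0 //.
have a0 : 0 < a by rewrite /a mulr_gt0 // exprn_gt0.
have : a * v ^+ 2 <= a * (pi + eta) ^+ 2 by rewrite ler_pM2l.
lra.
Qed.
Lemma cstar_ge (R : realType) (A be de r : R) (cb : \bar R) :
  (forall c : R, 0 < c -> (c%:E < cb)%E -> good_speed A be de r c) ->
  (cb <= cstar A be de r)%E.
Proof. by move=> H; apply: ereal_sup_ubound. Qed.

Lemma cstar_le (R : realType) (A be de r c : R) :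
  0 < c -> ~ good_speed A be de r c -> (cstar A be de r <= c%:E)%E.
Proof.
move=> c0 ng; apply: ge_ereal_sup => cb /= Hcb.
rewrite leNgt; apply/negP => h; apply: ng; exact: Hcb c c0 h.
Qed.

Lemma not_good (R : realType) (A be de r c x y : R) : 0 < x -> 0 < y ->
  chistar_re A be de r c x y = 0 -> chistar_im A be de r c x y = 0 ->
  ~ good_speed A be de r c.
Proof. by move=> x0 y0 h1 h2 g; have := g x y x0 h1 h2; move: y0 => /[swap] ->; rewrite ltxx. Qed.

Lemma part1 (R : realType) (A be de r : R) : 0 < A -> 0 < r -> be < 0 -> 0 < de ->
  (ckappa A be de r <= cstar A be de r)%E.
Proof.
move=> A0 r0 be0 de0; rewrite /ckappa; apply: ge_ereal_sup.
move=> z [c [c0 h3] <-].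
case: h3 => l1 [l2 [l3 [[_ l20 _] [[_ hl2 _] _]]]].
apply: cstar_ge => c' c'0; rewrite lte_fin => cc.
apply: good_of_pos => x y x0 y0 hre him.
apply: (@p1core R (A * c' ^- 2) be de r x y (- l2 * c)) => //.
- by rewrite mulr_gt0 // invr_gt0 exprn_gt0.
- by rewrite mulr_gt0 // oppr_gt0.
move: hl2; rewrite /chi_kappa => hl2.
have -> : expR ((- l2 * c) * r) = expR (- (l2 * c * r)) by congr expR; ring.
have hcc : 1 <= c ^+ 2 / c' ^+ 2.
  rewrite ler_pdivlMr ?exprn_gt0 // mul1r !expr2; apply: ler_pM; lra.
have -> : A * c' ^- 2 * (- l2 * c) ^+ 2 + - l2 * c - de + be * expR (- (l2 * c * r))
  = (A * l2 ^+ 2 + be * expR (- (l2 * c * r)) - c * l2 - de) + A * l2 ^+ 2 * (c ^+ 2 / c' ^+ 2 - 1).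
  by field; rewrite gt_eqF.
rewrite hl2 add0r; apply: mulr_ge0; last by rewrite subr_ge0.
by apply: mulr_ge0; [exact: ltW | exact: sqr_ge0].
Qed.

Lemma part2 (R : realType) (A be de r : R) : 0 < A -> 0 < r -> be < 0 -> - de <= be ->
  cstar A be de r = +oo%E.
Proof.
move=> A0 r0 be0 hde; apply/eqP; rewrite -leye_eq.
apply: cstar_ge => c c0 _; apply: good_of_pos => x y x0 y0 hre him.
apply: (@p2core R (A * c ^- 2) be de r x y) => //.
by rewrite mulr_gt0 // invr_gt0 exprn_gt0.
Qed.
Lemma cos_near1 (R : realType) (e : R) : 0 < e ->
  exists2 th : R, 0 < th & forall x, `|x| < th -> 1 - e < cos x.
Proof.
move=> e0.
have := @continuous_cos R 0.
move/cvgrPdist_lt => /(_ e e0) /nbhs_ballP [th th0 Hth].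
exists th => // x hx.
have : ball (0:R) th x by rewrite /ball /= sub0r normrN.
move/Hth => /=; rewrite cos0 => h.
have := ler_norm (1 - cos x); lra.
Qed.

Lemma sq_helper (R : realType) (A q r : R) : q != 0 -> r != 0 ->
  A = (q / r) ^+ 2 * (A / q ^+ 2 * r ^+ 2).
Proof. by move=> q0 r0; field; rewrite q0 r0. Qed.

Lemma p3bounds (R : realType) (A be de : R) : 0 < A -> be < - de -> 0 < de ->
  forall eps : R, 0 < eps -> exists M : R, 0 <= M /\ forall r, M < r ->
   (((mustar A be de - eps) / r)%:E <= cstar A be de r)%E /\
   (cstar A be de r <= ((mustar A be de + eps) / r)%:E)%E.
Proof.
move=> A0 hbe de0 eps e0.
have p0 := @pi_gt0 R; have p2 := @pi_ge2 R; have ph := @pihalf_ge1 R.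
have p4 : pi < 4 :> R by have := @pihalf_lt2 R; lra.
set b := - be.
have b0 : 0 < b by rewrite /b; lra.
have bd : 0 < b - de by rewrite /b; lra.
set S := Num.sqrt (A / (b - de)).
have S0 : 0 < S by rewrite /S sqrtr_gt0 divr_gt0.
have hS2 : S ^+ 2 = A / (b - de) by rewrite /S sqr_sqrtr // ltW // divr_gt0.
have hmu : mustar A be de = pi * S by [].
rewrite hmu.
set eta := Num.min (eps / (S + 1)) (1 / 2).
have eta0 : 0 < eta by rewrite /eta lt_min divr_gt0 //=; lra.
have eta1' : eta <= 1/2 by rewrite /eta ge_min lexx orbT.
have eta1 : eta < 1 by lra.
have etaS : eta * S <= eps.
  have : eta <= eps / (S + 1) by rewrite /eta ge_min lexx.
  rewrite ler_pdivlMr; last lra.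
  move=> h; have : eta * S <= eta * (S + 1) by rewrite ler_pM2l //; lra.
  lra.
have pe : 0 < pi - eta by lra.
set k1 := (b - de) / (pi - eta) ^+ 2.
have k10 : 0 < k1 by rewrite /k1 divr_gt0 // exprn_gt0.
have se : 0 < sin eta by apply: sin_gt0_pihalf; rewrite eta0 /=; lra.
set M1 := 1 / (2 * k1) + pi * expR 1 / (b * sin eta) + 1.
have hM1a : 0 <= 1 / (2 * k1) by rewrite divr_ge0 // ltW // mulr_gt0.
have hM1b : 0 <= pi * expR 1 / (b * sin eta) by rewrite divr_ge0 // ltW // ?mulr_gt0 // expR_gt0.
set kt := A / (pi * S + eps) ^+ 2.
have pSe : 0 < pi * S + eps by rewrite addr_gt0 // mulr_gt0.
have kt0 : 0 < kt by rewrite /kt divr_gt0 // exprn_gt0.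
have hkt : kt * pi ^+ 2 < b - de.
  have hA : A = (b - de) * S ^+ 2 by rewrite hS2; field; rewrite gt_eqF.
  rewrite /kt mulrAC ltr_pdivrMr ?exprn_gt0 // hA.
  have hpS : 0 < pi * S by rewrite mulr_gt0.
  have : (pi * S) ^+ 2 < (pi * S + eps) ^+ 2 by rewrite !expr2; apply: ltr_pM; lra.
  move=> h; have : (b - de) * (pi * S) ^+ 2 < (b - de) * (pi * S + eps) ^+ 2 by rewrite ltr_pM2l.
  have -> : (b - de) * S ^+ 2 * pi ^+ 2 = (b - de) * (pi * S) ^+ 2 by ring.
  lra.
set g := b - de - kt * pi ^+ 2.
have g0 : 0 < g by rewrite /g; lra.
have [th th0 Hth] := @cos_near1 R (g / (4 * b)) (divr_gt0 g0 (mulr_gt0 (ltr0n _ 4) b0)).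
set eta2 := Num.min (Num.min (th / 2) (1 / 2)) (g / (36 * (kt + 1))).
have e2a : eta2 <= th / 2 by rewrite /eta2 !ge_min lexx.
have e2b : eta2 <= 1 / 2 by rewrite /eta2 !ge_min lexx !orbT.
have e2c : eta2 <= g / (36 * (kt + 1)) by rewrite /eta2 ge_min lexx orbT.
have eta20 : 0 < eta2 by rewrite /eta2 !lt_min !divr_gt0 //= ?mulr_gt0 //; lra.
have ce : 1 - g / (4 * b) < cos eta2 by apply: Hth; rewrite gtr0_norm //; lra.
have se2 : 0 < sin eta2 by apply: sin_gt0_pihalf; rewrite eta20 /=; lra.
set u := Num.min (Num.min (1 / 2) (sin eta2 / 2)) (g / (4 * (b + 1))).
have ua : u <= 1 / 2 by rewrite /u !ge_min lexx.
have ub : u <= sin eta2 / 2 by rewrite /u !ge_min lexx !orbT.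
have uc : u <= g / (4 * (b + 1)) by rewrite /u ge_min lexx orbT.
have u0 : 0 < u by rewrite /u !lt_min !divr_gt0 //= ?mulr_gt0 //; lra.
set N := b * (1 - u) * cos eta2 - de - u / 2.
have hN : kt * (pi + eta2) ^+ 2 < N.
  have h1 : b * (1 - u) * (1 - g / (4 * b)) <= b * (1 - u) * cos eta2.
    by rewrite ler_pM2l ?mulr_gt0 ?ltW //; lra.
  have h2 : b * (1 - u) * (1 - g / (4 * b)) = b * (1 - u) - (1 - u) * g / 4.
    by field; rewrite gt_eqF.
  have h3 : u * (b + 1) <= g / 4.
    by move: uc; rewrite ler_pdivlMr ?mulr_gt0 //; lra.
  have ug : 0 <= u * g by rewrite mulr_ge0 // ltW.
  have h4 : (1 - u) * g / 4 <= g / 4 by rewrite ler_pM2r //; lra.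
  have h5 : kt * (pi + eta2) ^+ 2 <= kt * pi ^+ 2 + g / 4.
    have -> : kt * (pi + eta2) ^+ 2 = kt * pi ^+ 2 + kt * eta2 * (2 * pi + eta2) by ring.
    have kte : 0 <= kt * eta2 by apply: mulr_ge0; apply: ltW.
    have : kt * eta2 * (2 * pi + eta2) <= kt * eta2 * 9 by apply: ler_wpM2l => //; lra.
    have : kt * eta2 * 9 <= g / 4.
      move: e2c; rewrite ler_pdivlMr ?mulr_gt0 //; last lra.
      have : kt * eta2 <= (kt + 1) * eta2 by rewrite ler_pM2r //; lra.
      nra.
    lra.
  have hg : g = b - de - kt * pi ^+ 2 by [].
  rewrite /N; lra.
have N0' : 0 < kt * (pi + eta2) ^+ 2 by rewrite mulr_gt0 // exprn_gt0 //; lra.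
have N0 : 0 < N by lra.
have bud : 0 < b * (1 - u) - de.
  have bu0 : 0 < b * (1 - u) by rewrite mulr_gt0 //; lra.
  have : b * (1 - u) * cos eta2 <= b * (1 - u).
    by rewrite -[X in _ <= X]mulr1 ler_pM2l // cos_le1.
  rewrite /N in N0; lra.
set M2 := 1 + (pi ^+ 2 + 1) / (2 * u * (b * (1 - u) - de)).
have hM2 : 0 <= (pi ^+ 2 + 1) / (2 * u * (b * (1 - u) - de)).
  by rewrite divr_ge0 // ?ltW // ?mulr_gt0 // addr_gt0 // exprn_gt0.
exists (M1 + M2); split; first by rewrite /M1 /M2; lra.
move=> r hr.
have r1 : 1 < r by rewrite /M1 /M2 in hr; lra.
have r0 : 0 < r by lra.
split.
  apply: (@le_trans _ _ (((pi - eta) * S / r)%:E)).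
    rewrite lee_fin ler_pM2r ?invr_gt0 //; lra.
  apply: cstar_ge => c c0; rewrite lte_fin => hc.
  apply: good_of_pos => x y x0 y0 hre him.
  apply: (@p3low R (A * c ^- 2) be de r x y eta) => //.
  - have c2 : 0 < c ^+ 2 by rewrite exprn_gt0.
    rewrite -(ler_pM2r c2) mulrVK ?unitfE ?gt_eqF //.
    have h : (c * r) ^+ 2 <= ((pi - eta) * S) ^+ 2.
      have hcr : c * r < (pi - eta) * S by move: hc; rewrite ltr_pdivlMr.
      have cr0 : 0 < c * r by rewrite mulr_gt0.
      rewrite !expr2; apply: ler_pM; lra.
    have -> : k1 * r ^+ 2 * c ^+ 2 = (b - de) / (pi - eta) ^+ 2 * (c * r) ^+ 2 by rewrite /k1; ring.
    have -> : A = (b - de) / (pi - eta) ^+ 2 * ((pi - eta) * S) ^+ 2.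
      rewrite exprMn hS2; field.
      by apply/andP; split; rewrite gt_eqF //; rewrite /b in bd; lra.
    by rewrite ler_pM2l.
  - have : 1 / (2 * k1) < r by rewrite /M1 /M2 in hr; lra.
    rewrite ltr_pdivrMr; last exact: mulr_gt0.
    move=> h; change (1 <= 2 * k1 * r); lra.
  - have : pi * expR 1 / (b * sin eta) < r by rewrite /M1 /M2 in hr; lra.
    rewrite ltr_pdivrMr; last exact: mulr_gt0.
    move=> h; change (pi * expR 1 <= b * sin eta * r); lra.
have hr2 : pi ^+ 2 + 1 < 2 * u * (b * (1 - u) - de) * r.
  have : (pi ^+ 2 + 1) / (2 * u * (b * (1 - u) - de)) < r by rewrite /M1 /M2 in hr; lra.
  rewrite ltr_pdivrMr; last by apply: mulr_gt0 => //; apply: mulr_gt0.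
  by rewrite mulrC.
have [x [y [a [x0 [y0 [a0 [hre [him ha]]]]]]]] :=
  @p3exist R be de r u eta2 hbe de0 eta20 ltac:(lra) u0 ua ub (ltW r1) N0 hr2.
set c := Num.sqrt (A / a).
have c0 : 0 < c by rewrite /c sqrtr_gt0 divr_gt0.
have hc : A * c ^- 2 = a.
  by rewrite /c sqr_sqrtr ?divr_ge0 ?ltW //; field; rewrite !gt_eqF.
apply: (@le_trans _ _ c%:E).
  apply: cstar_le => //; apply: (@not_good R A be de r c x y) => //.
  - by rewrite /chistar_re hc.
  - by rewrite /chistar_im hc.
rewrite lee_fin /c.
have hab : kt * r ^+ 2 <= a.
  apply: le_trans ha; rewrite ler_pM2r ?exprn_gt0 //.
  rewrite ler_pdivlMr ?exprn_gt0 //; last lra.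
  exact: ltW hN.
have q0 : 0 < (pi * S + eps) / r by rewrite divr_gt0.
rewrite -[X in _ <= X]gtr0_norm // -sqrtr_sqr ler_sqrt ?sqr_ge0 //.
rewrite ler_pdivrMr // .
have -> : A = ((pi * S + eps) / r) ^+ 2 * (kt * r ^+ 2).
  by rewrite /kt; apply: sq_helper; rewrite gt_eqF.
by rewrite ler_pM2l // exprn_gt0.
Qed.
Unset Implicit Arguments.
Theorem lemma6p4 (R : realType) (m D kappa sM : R)
    (d d1 d2 b b1 : R -> R) :
  1 < m -> 0 < D ->
  (* d in C^2([0,+oo)) with d' = d1, d'' = d2 *)
  {within `[0, +oo[, continuous d} ->
  {within `[0, +oo[, continuous d1} ->
  {within `[0, +oo[, continuous d2} ->
  (forall s : R, 0 < s -> is_derive s 1 d (d1 s)) ->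
  (forall s : R, 0 < s -> is_derive s 1 d1 (d2 s)) ->
  d 0 = 0 ->
  (forall s : R, 0 < s -> 0 < d1 s) ->
  (forall s : R, 0 < s -> 0 <= d2 s) ->
  (* b in C^1([0,+oo); [0,+oo)) with b' = b1 *)
  {within `[0, +oo[, continuous b} ->
  {within `[0, +oo[, continuous b1} ->
  (forall s : R, 0 < s -> is_derive s 1 b (b1 s)) ->
  (forall s : R, 0 <= s -> 0 <= b s) ->
  (* sM is the only positive local extremum point of b, and its global max *)
  0 < sM -> local_extremum b sM ->
  (forall s : R, 0 < s -> local_extremum b s -> s = sM) ->
  (forall s : R, 0 <= s -> b s <= b sM) ->
  b 0 = 0 ->
  0 < kappa -> b kappa = d kappa ->
  b1 0 > d1 0 -> b1 kappa < d1 kappa ->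
  (forall s : R, 0 < s < kappa -> d s < b s /\ b s <= b1 0 * s) ->
  sM < kappa ->
  b1 kappa < 0 ->
  let A := D * m * kappa `^ (m - 1) in
  (forall r : R, 0 < r -> (ckappa A (b1 kappa) (d1 kappa) r <= cstar A (b1 kappa) (d1 kappa) r)%E) /\
  (- d1 kappa <= b1 kappa ->
     exists r0 : R, forall r : R, r0 <= r -> cstar A (b1 kappa) (d1 kappa) r = +oo%E) /\
  (b1 kappa < - d1 kappa ->
     (\forall r \near +oo, cstar A (b1 kappa) (d1 kappa) r \is a fin_num) /\
     (fun r => r * fine (cstar A (b1 kappa) (d1 kappa) r)) @ +oo
       --> mustar A (b1 kappa) (d1 kappa)).
Proof.
move=> m1 D0 _ _ _ _ _ _ d1p _ _ _ _ _ _ _ _ _ _ k0 _ _ _ _ _ be0 A.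
have A0 : 0 < A by rewrite /A !mulr_gt0 ?powR_gt0 //; lra.
have de0 : 0 < d1 kappa by apply: d1p.
split; first by move=> r r0; exact: part1.
split.
  by move=> hde; exists 1 => r r1; apply: part2 => //; lra.
move=> hbe; split.
  have [M [M0 HM]] := p3bounds A0 hbe de0 (@ltr01 R).
  exists M; split; first by rewrite num_real.
  move=> r /HM [].
  by case: (cstar _ _ _ r).
apply/cvgrPdist_le => eps e0.
have [M [M0 HM]] := p3bounds A0 hbe de0 e0.
exists M; split; first by rewrite num_real.
move=> r hr; have r0 : 0 < r by lra.
have [] := HM r hr.
case: (cstar _ _ _ r) => // x; rewrite !lee_fin /= => h1 h2.
move: h1 h2; rewrite ler_pdivrMr // ler_pdivlMr // => h1 h2.
rewrite ler_norml; apply/andP; split; nra.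
Qed.
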